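(* Let $\mathbb{F}_2=\langle a\rangle\ast\langle b\rangle$ and let $f=f_A\ast f_B$ be a split quasimorphism with bounded factors $f_A,f_B$. Then $f$ is at bounded distance from the (pointwise convergent) sum \[ \sum_{k=1}^\infty f_A(a^k)C_{a,k}+f_B(b^k)C_{b,k}, \] which is a quasimorphism; in particular $\widehat f=\sum_{k=1}^\infty f_A(a^k)\widehat{C}_{a,k}+f_B(b^k)\widehat{C}_{b,k}$. Furthermore, if $f_A$ and $f_B$ have finite support, then $f$ is at bounded distance from a finite linear combination of counting quasimorphisms.
   Context: $f_A:\langle a\rangle\to\mathbb{R}$, $f_B:\langle b\rangle\to\mathbb{R}$ are bounded and alternating ($f(x^{-1})=-f(x)$); each non-trivial element of $\mathbb{F}_2$ has a unique normal form $a^{k_1}b^{l_1}\cdots a^{k_m}b^{l_m}$ with all exponents non-zero except possibly $k_1$ or $l_m$, and $f(1)=0$, $f(a^{k_1}b^{l_1}\cdots)=f_A(a^{k_1})+f_B(b^{l_1})+\dots+f_A(a^{k_m})+f_B(b^{l_m})$. For $w,g\in\mathbb{F}_2$, $h_w(g)$ is the number of occurrences (overlaps allowed) of the reduced word $w$ as a subword of the reduced word $g$ over $a^{\pm1},b^{\pm1}$ ($h_w(g)=0$ if $w$ or $g$ is trivial), and the counting quasimorphism is $C_w=h_w-h_{w^{-1}}$. For $k\geq1$: $C_{a,k}=C_{ba^kb}+C_{ba^kb^{-1}}+C_{b^{-1}a^kb}+C_{b^{-1}a^kb^{-1}}$ and $C_{b,k}=C_{ab^ka}+C_{ab^ka^{-1}}+C_{a^{-1}b^ka}+C_{a^{-1}b^ka^{-1}}$.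 Hats denote homogenization $\widehat F(g)=\lim_{n\to\infty}F(g^n)/n$. *)

(* Defs.v *)
(* free group F_2 = <a> * <b> modelled by freely reduced words. *)
From Stdlib Require Import Reals ZArith List Bool.
Open Scope R_scope.

(** Generators and letters: a letter is a generator with a flag [true] = inverse. *)
Inductive gen := Ga | Gb.
Definition letter := (gen * bool)%type.

Definition gen_eqb (x y : gen) : bool :=
  match x, y with Ga, Ga | Gb, Gb => true | _, _ => false end.
Definition letter_eqb (x y : letter) : bool :=
  gen_eqb (fst x) (fst y) && Bool.eqb (snd x) (snd y).
Definition letter_inv (x : letter) : letter := (fst x, negb (snd x)).

Definition word := list letter.

Fixpoint reduced (w : word) : Prop :=
  match w with
  | nil => True
  | x :: w' =>
      match w' with
      | nil => True
      | y :: _ => letter_eqb y (letter_inv x) = false /\ reduced w'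
      end
  end.

Definition push (x : letter) (w : word) : word :=
  match w with
  | y :: w' => if letter_eqb y (letter_inv x) then w' else x :: w
  | nil => x :: nil
  end.
Definition reduce (w : word) : word := fold_right push nil w.

Definition mul (g h : word) : word := reduce (g ++ h).
Definition winv (g : word) : word := rev (map letter_inv g).
Definition pow (g : word) (n : nat) : word := reduce (concat (repeat g n)).

Definition gpow (x : gen) (k : nat) : word := repeat (x, false) k.

(** Subword counting: h_w(g) = number of (possibly overlapping) occurrences of
    w as a subword of g; 0 if w or g is trivial. *)
Fixpoint prefixb (w g : word) : bool :=
  match w, g with
  | nil, _ => true
  | x :: w', y :: g' => letter_eqb x y && prefixb w' g'
  | _ :: _, nil => false
  end.
Fixpoint occ (w g : word) : nat :=
  match g with
  | nil => 0
  | _ :: g' => (if prefixb w g then 1 else 0) + occ w g'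
  end.
Definition hcount (w g : word) : nat :=
  match w with nil => 0%nat | _ => occ w g end.

Definition Ccount (w : word) (g : word) : R :=
  INR (hcount w g) - INR (hcount (winv w) g).

Definition ainv : word := (Ga, true) :: nil.
Definition binv : word := (Gb, true) :: nil.
Definition aw : word := (Ga, false) :: nil.
Definition bw : word := (Gb, false) :: nil.

Definition Ca (k : nat) (g : word) : R :=
  Ccount (bw ++ gpow Ga k ++ bw) g + Ccount (bw ++ gpow Ga k ++ binv) g
  + Ccount (binv ++ gpow Ga k ++ bw) g + Ccount (binv ++ gpow Ga k ++ binv) g.
Definition Cb (k : nat) (g : word) : R :=
  Ccount (aw ++ gpow Gb k ++ aw) g + Ccount (aw ++ gpow Gb k ++ ainv) g
  + Ccount (ainv ++ gpow Gb k ++ aw) g + Ccount (ainv ++ gpow Gb k ++ ainv) g.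

(** Syllable decomposition of a (reduced) word: maximal runs of one generator,
    giving the normal form a^{k1} b^{l1} ... as a list of (generator, exponent). *)
Definition letter_exp (x : letter) : Z := if snd x then (-1)%Z else 1%Z.
Fixpoint syllables (w : word) : list (gen * Z) :=
  match w with
  | nil => nil
  | x :: w' =>
      match syllables w' with
      | (g', k) :: rest =>
          if gen_eqb (fst x) g' then (g', (letter_exp x + k)%Z) :: rest
          else (fst x, letter_exp x) :: (g', k) :: rest
      | nil => (fst x, letter_exp x) :: nil
      end
  end.

(** Split quasimorphism f = f_A * f_B, with f_A(a^k) = fA k, f_B(b^k) = fB k. *)
Definition split_qm (fA fB : Z -> R) (g : word) : R :=
  fold_right (fun s acc =>
    (match fst s with Ga => fA (snd s) | Gb => fB (snd s) end) + acc)
    0 (syllables g).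

Definition bounded_alternating (f : Z -> R) : Prop :=
  (exists M : R, forall k : Z, Rabs (f k) <= M) /\
  (forall k : Z, f (- k)%Z = - f k).

Definition finitely_supported (f : Z -> R) : Prop :=
  exists N : Z, forall k : Z, (N < Z.abs k)%Z -> f k = 0.

Definition is_quasimorphism (F : word -> R) : Prop :=
  exists D : R, forall g h : word, reduced g -> reduced h ->
    Rabs (F (mul g h) - F g - F h) <= D.

Definition bounded_distance (F G : word -> R) : Prop :=
  exists D : R, forall g : word, reduced g -> Rabs (F g - G g) <= D.

Definition homog (F : word -> R) (g : word) (l : R) : Prop :=
  Un_cv (fun n => F (pow g (S n)) / INR (S n)) l.

Definition series_term (fA fB : Z -> R) (k : nat) (g : word) : R :=
  fA (Z.of_nat k) * Ca k g + fB (Z.of_nat k) * Cb k g.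

Definition lin_comb (L : list (word * R)) (g : word) : R :=
  fold_right (fun p acc => snd p * Ccount (fst p) g + acc) 0 L.

(* Main.v *)
Require Import Defs.
From Stdlib Require Import Reals ZArith List Lia Lra Bool.
Open Scope R_scope.


Lemma gen_eqb_eq x y : gen_eqb x y = true -> x = y.
Proof. destruct x, y; simpl; congruence. Qed.
Lemma gen_eqb_refl x : gen_eqb x x = true.
Proof. destruct x; reflexivity. Qed.
Lemma letter_eqb_eq x y : letter_eqb x y = true -> x = y.
Proof. destruct x as [a s], y as [b t]; unfold letter_eqb; simpl.
  destruct a, b, s, t; simpl; congruence. Qed.
Lemma letter_eqb_refl x : letter_eqb x x = true.
Proof. destruct x as [a s]; destruct a, s; reflexivity. Qed.

Lemma reduced_tl x g : reduced (x :: g) -> reduced g.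
Proof. destruct g; simpl; tauto. Qed.

Fixpoint reducedb (w : word) : bool :=
  match w with
  | nil => true
  | x :: w' => match w' with nil => true | y :: _ => negb (letter_eqb y (letter_inv x)) && reducedb w' end
  end.

Lemma push_reduced x w : reduced w -> reduced (push x w).
Proof.
  destruct w as [|y w]; simpl; [tauto|].
  intros H. destruct (letter_eqb y (letter_inv x)) eqn:E.
  - destruct w; simpl in *; tauto.
  - simpl. split; [exact E| exact H].
Qed.

Lemma reduce_reduced w : reduced (reduce w).
Proof. induction w; simpl; [exact I|]. apply push_reduced; auto. Qed.

Lemma reduced_reduce w : reduced w -> reduce w = w.
Proof.
  induction w as [|x w IH]; simpl; auto. intro H.
  rewrite IH by (eapply reduced_tl; eauto).
  destruct w as [|y w]; simpl; auto.
  destruct H as [H1 _]. rewrite H1. auto.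
Qed.

Lemma letter_inv_inv x : letter_inv (letter_inv x) = x.
Proof. destruct x as [a s]; unfold letter_inv; simpl; rewrite negb_involutive; auto. Qed.

Lemma push_push_inv x t : reduced t -> push x (push (letter_inv x) t) = t.
Proof.
  intro H. destruct t as [|y t]; simpl.
  - destruct x as [a s]; destruct a, s; reflexivity.
  - rewrite letter_inv_inv. destruct (letter_eqb y x) eqn:E.
    + apply letter_eqb_eq in E; subst y. destruct t as [|z t]; simpl; auto.
      destruct H as [H _]. rewrite H. auto.
    + simpl. destruct x as [a s]; destruct a, s; reflexivity.
Qed.

Definition act (p s : word) := fold_right push s p.

Lemma act_reduced p s : reduced s -> reduced (act p s).
Proof. induction p; simpl; auto. intro; apply push_reduced; auto. Qed.

Lemma act_reduce p s : reduced s -> act p s = act (reduce p) s.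
Proof.
  intro Hs. induction p as [|x p IH]; simpl; auto.
  rewrite IH. unfold reduce at 1. fold (reduce p).
  destruct (reduce p) as [|y r] eqn:E; simpl; auto.
  destruct (letter_eqb y (letter_inv x)) eqn:E2; simpl; auto.
  apply letter_eqb_eq in E2; subst y.
  apply push_push_inv. apply act_reduced; auto.
Qed.

Lemma reduce_app p q : reduce (p ++ q) = mul (reduce p) (reduce q).
Proof.
  unfold mul. 
  assert (E: forall a b, reduce (a ++ b) = act a (reduce b)).
  { intros; unfold reduce, act; rewrite fold_right_app; reflexivity. }
  rewrite !E. rewrite (reduced_reduce (reduce q)) by apply reduce_reduced.
  apply act_reduce. apply reduce_reduced.
Qed.

Lemma pow_add g m n : Defs.pow g (m + n) = mul (Defs.pow g m) (Defs.pow g n).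
Proof.
  unfold Defs.pow. rewrite repeat_app, concat_app. apply reduce_app.
Qed.

Lemma pow_reduced g n : reduced (Defs.pow g n).
Proof. apply reduce_reduced. Qed.

Lemma mul_reduced g h : reduced (mul g h).
Proof. apply reduce_reduced. Qed.

Lemma push_length x w : (length (push x w) <= S (length w))%nat.
Proof. destruct w; simpl; auto. destruct (letter_eqb _ _); simpl; lia. Qed.

Lemma reduce_length w : (length (reduce w) <= length w)%nat.
Proof. induction w; simpl; auto. pose proof (push_length a (reduce w)). lia. Qed.

Lemma pow_length g n : (length (Defs.pow g n) <= n * length g)%nat.
Proof.
  unfold Defs.pow. eapply Nat.le_trans; [apply reduce_length|].
  induction n; simpl; auto. rewrite length_app. lia.
Qed.

Lemma winv_cons x v : winv (x :: v) = winv v ++ letter_inv x :: nil.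
Proof. unfold winv. simpl. reflexivity. Qed.

Lemma mul_decomp g h : reduced g -> reduced h ->
  exists u v w, g = u ++ v /\ h = winv v ++ w /\ mul g h = u ++ w.
Proof.
  intros Hg Hh. unfold mul, reduce. rewrite fold_right_app. fold (reduce h).
  rewrite (reduced_reduce h Hh).
  induction g as [|x g IH].
  - exists nil, nil, h. simpl. auto.
  - destruct IH as [u [v [w [E1 [E2 E3]]]]]. eapply reduced_tl; eauto.
    simpl. rewrite E3. destruct u as [|y u].
    + simpl in E1. subst g. destruct w as [|z w].
      * exists (x::nil), v, nil. simpl. auto.
      * simpl. destruct (letter_eqb z (letter_inv x)) eqn:E.
        -- apply letter_eqb_eq in E. subst z. exists nil, (x::v), w.
           split; auto. rewrite winv_cons, <- app_assoc. simpl. auto.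
        -- exists (x::nil), v, (z::w). simpl. auto.
    + simpl. rewrite E1 in Hg. simpl in Hg. destruct Hg as [Hg _]. rewrite Hg.
      exists (x::y::u), v, w. rewrite E1. simpl. auto.
Qed.


Definition step (x : letter) (S : list (gen * Z)) : list (gen * Z) :=
  match S with
  | (g', k) :: rest =>
      if gen_eqb (fst x) g' then (g', (letter_exp x + k)%Z) :: rest
      else (fst x, letter_exp x) :: (g', k) :: rest
  | nil => (fst x, letter_exp x) :: nil
  end.

Lemma syllables_cons x w : syllables (x :: w) = step x (syllables w).
Proof. reflexivity. Qed.

Fixpoint merge (T S : list (gen * Z)) : list (gen * Z) :=
  match T with
  | nil => S
  | t :: T' =>
      match T' with
      | nil => match S with
               | s :: S' => if gen_eqb (fst t) (fst s) then (fst t, (snd t + snd s)%Z) :: S' else t :: S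
               | nil => t :: nil
               end
      | _ => t :: merge T' S
      end
  end.

Lemma step_merge x T S : step x (merge T S) = merge (step x T) S.
Proof.
  destruct T as [|[h a] T].
  - simpl. destruct S as [|[h' k] S]; simpl; auto.
    destruct (gen_eqb (fst x) h') eqn:E; auto.
    apply gen_eqb_eq in E; subst; auto.
  - destruct T as [|t' T].
    + simpl. destruct S as [|[h' k] S]; simpl.
      * destruct (gen_eqb (fst x) h); simpl; auto.
      * destruct (gen_eqb h h') eqn:E1; destruct (gen_eqb (fst x) h) eqn:E2; simpl. all: rewrite ?E1, ?E2; try rewrite Z.add_assoc; try reflexivity.
    + simpl. destruct (gen_eqb (fst x) h); simpl; auto.
Qed.

Lemma syllables_app p q : syllables (p ++ q) = merge (syllables p) (syllables q).
Proof.
  induction p as [|x p IH]; simpl; auto.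
  change (step x (syllables (p ++ q)) = merge (step x (syllables p)) (syllables q)).
  rewrite IH. apply step_merge.
Qed.

Section SV.
Variables fA fB : Z -> R.
Definition sv (s : gen * Z) : R := match fst s with Ga => fA (snd s) | Gb => fB (snd s) end.
Definition sumv (l : list (gen * Z)) : R := fold_right (fun s acc => sv s + acc) 0 l.

Lemma split_sumv g : split_qm fA fB g = sumv (syllables g).
Proof. reflexivity. Qed.

Lemma sumv_app l1 l2 : sumv (l1 ++ l2) = sumv l1 + sumv l2.
Proof. induction l1; simpl; [lra|]. rewrite IHl1. lra. Qed.

Variable M : R.
Hypothesis HM : forall s, Rabs (sv s) <= M.

Lemma sumv_merge T S : Rabs (sumv (merge T S) - sumv T - sumv S) <= 3 * M.
Proof.
  assert (M0 : 0 <= M) by (eapply Rle_trans; [apply Rabs_pos| apply (HM (Ga,0%Z))]).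
  induction T as [|t T IH].
  - simpl. rewrite Rminus_0_r, Rminus_eq_0, Rabs_R0. lra.
  - destruct T as [|t' T].
    + simpl. destruct S as [|s S]; simpl.
      * replace (sv t + 0 - (sv t + 0) - 0) with 0 by ring. rewrite Rabs_R0; lra.
      * destruct (gen_eqb (fst t) (fst s)) eqn:E; simpl.
        -- apply gen_eqb_eq in E. destruct t as [h a], s as [h' b]; simpl in *; subst.
           replace (sv (h', (a + b)%Z) + sumv S - (sv (h', a) + 0) - (sv (h', b) + sumv S))
             with (sv (h', (a + b)%Z) - sv (h',a) - sv (h',b)) by ring.
           pose proof (HM (h', (a+b)%Z)); pose proof (HM (h',a)); pose proof (HM (h',b)).
           eapply Rle_trans; [apply Rabs_triang|]. 
           eapply Rle_trans; [apply Rplus_le_compat_r; apply Rabs_triang|].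
           rewrite !Rabs_Ropp. lra.
        -- replace (sv t + (sv s + sumv S) - (sv t + 0) - (sv s + sumv S)) with 0 by ring.
           rewrite Rabs_R0; lra.
    + change (Rabs (sv t + sumv (merge (t' :: T) S) - (sv t + sumv (t' :: T)) - sumv S) <= 3 * M).
      replace (sv t + sumv (merge (t' :: T) S) - (sv t + sumv (t' :: T)) - sumv S)
        with (sumv (merge (t' :: T) S) - sumv (t' :: T) - sumv S) by ring. exact IH.
Qed.

Lemma split_app p q : Rabs (split_qm fA fB (p ++ q) - split_qm fA fB p - split_qm fA fB q) <= 3 * M.
Proof. rewrite !split_sumv, syllables_app. apply sumv_merge. Qed.

Hypothesis altA : forall k, fA (- k)%Z = - fA k.
Hypothesis altB : forall k, fB (- k)%Z = - fB k.

Definition negs (s : gen * Z) : gen * Z := (fst s, (- snd s)%Z).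

Lemma merge_last R t s : merge (R ++ t :: nil) (s :: nil) =
  if gen_eqb (fst t) (fst s) then R ++ (fst t, (snd t + snd s)%Z) :: nil else R ++ t :: s :: nil.
Proof.
  induction R as [|r R IH].
  - simpl. destruct (gen_eqb _ _); auto.
  - simpl. destruct (R ++ t :: nil) eqn:E.
    + destruct R; discriminate.
    + rewrite IH. destruct (gen_eqb _ _); auto.
Qed.

Lemma syllables_winv v : syllables (winv v) = rev (map negs (syllables v)).
Proof.
  induction v as [|x v IH]; simpl; auto.
  rewrite winv_cons, syllables_app, IH. simpl.
  destruct (syllables v) as [|[h k] S]; simpl.
  - f_equal. unfold negs. destruct x as [a s]; destruct s; reflexivity.
  - rewrite merge_last. simpl.
    destruct (gen_eqb (fst x) h) eqn:E.
    + apply gen_eqb_eq in E. rewrite <- E, gen_eqb_refl. simpl.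
      f_equal. unfold negs; simpl. f_equal. f_equal.
      destruct x as [a s]; destruct s; unfold letter_exp, letter_inv; cbn [fst snd negb]; lia.
    + assert (gen_eqb h (fst x) = false) by (destruct h, (fst x); simpl in *; auto).
      rewrite H. simpl. rewrite <- !app_assoc. simpl. f_equal. f_equal. unfold negs; simpl.
      destruct x as [a s]; destruct s; simpl; auto.
Qed.

Lemma sumv_rev l : sumv (rev l) = sumv l.
Proof. induction l; simpl; auto. rewrite sumv_app, IHl. simpl. lra. Qed.

Lemma sumv_negs l : sumv (map negs l) = - sumv l.
Proof. induction l as [|[h k] l IH]; simpl; [lra|]. rewrite IH. unfold sv, negs; simpl.
  destruct h; [rewrite altA|rewrite altB]; lra. Qed.

Lemma split_winv v : split_qm fA fB (winv v) = - split_qm fA fB v.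
Proof. rewrite !split_sumv, syllables_winv, sumv_rev, sumv_negs. auto. Qed.

Lemma split_qm_quasi : forall g h, reduced g -> reduced h ->
  Rabs (split_qm fA fB (mul g h) - split_qm fA fB g - split_qm fA fB h) <= 9 * M.
Proof.
  intros g h Hg Hh. destruct (mul_decomp g h Hg Hh) as [u [v [w [E1 [E2 E3]]]]].
  rewrite E3, E1, E2.
  pose proof (split_app u w). pose proof (split_app u v). pose proof (split_app (winv v) w).
  rewrite split_winv in H1.
  set (a := split_qm fA fB (u ++ w)) in *. set (b := split_qm fA fB (u ++ v)) in *.
  set (c := split_qm fA fB (winv v ++ w)) in *.
  set (su := split_qm fA fB u) in *. set (sw := split_qm fA fB w) in *. set (sv' := split_qm fA fB v) in *.
  replace (a - b - c) with ((a - su - sw) - (b - su - sv') - (c - - sv' - sw)) by ring.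
  eapply Rle_trans; [apply Rabs_triang|]. unfold Rminus at 1.
  eapply Rle_trans; [apply Rplus_le_compat_r; apply Rabs_triang|].
  rewrite !Rabs_Ropp. lra.
Qed.

End SV.


Lemma syllables_nil g : syllables g = nil -> g = nil.
Proof. destruct g as [|x g]; auto. simpl. destruct (syllables g) as [|[? ?] ?]; [|destruct (gen_eqb _ _)]; discriminate. Qed.

Lemma decomp g : reduced g -> forall h j rest, syllables g = (h,j)::rest ->
 exists (t : bool) (m : nat) (w : word), (1 <= m)%nat /\ j = (if t then - Z.of_nat m else Z.of_nat m)%Z /\
   g = repeat (h,t) m ++ w /\
   ((rest = nil /\ w = nil) \/
    (exists h' j' rest' u w', rest = (h',j')::rest' /\ w = u::w' /\ fst u = h' /\ gen_eqb h' h = false)).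
Proof.
  induction g as [|x g IH]; intros Hg h j rest E; [discriminate|].
  rewrite syllables_cons in E. destruct (syllables g) as [|[h0 j0] rest0] eqn:Eg.
  - apply syllables_nil in Eg. subst g. simpl in E. injection E; intros; subst.
    exists (snd x), 1%nat, nil. destruct x as [a s]. simpl. split; [lia|].
    split; [destruct s; reflexivity|]. split; auto.
  - destruct (IH (reduced_tl _ _ Hg) h0 j0 rest0 eq_refl) as [t [m [w [Hm [Ej [Eg2 Hr]]]]]].
    simpl in E. destruct (gen_eqb (fst x) h0) eqn:Ex.
    + apply gen_eqb_eq in Ex. injection E as E1 E2 E3.
      assert (Hx : x = (h0, t)).
      { rewrite Eg2 in Hg. destruct m as [|m]; [lia|]. simpl in Hg. destruct Hg as [Hg _].
        destruct x as [a s]; simpl in *; subst a. unfold letter_eqb, letter_inv in Hg. simpl in Hg.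
        rewrite gen_eqb_refl in Hg. simpl in Hg. destruct s, t; simpl in *; congruence. }
      exists t, (S m), w. split; [lia|]. split.
      * rewrite <- E2, Ej, Hx. unfold letter_exp. simpl. destruct t; lia.
      * split; [rewrite Eg2, Hx, <- E1; reflexivity|]. rewrite <- E3, <- E1. exact Hr.
    + injection E; intros; subst h j rest.
      exists (snd x), 1%nat, g. split; [lia|]. split; [destruct x as [a s]; destruct s; reflexivity|].
      split; [destruct x; reflexivity|]. right.
      exists h0, j0, rest0, (h0,t), (repeat (h0,t) (m-1) ++ w). split; auto.
      split; [subst g; destruct m; [lia|]; simpl; rewrite Nat.sub_0_r; auto|].
      split; auto. destruct h0, (fst x); simpl in *; auto.
Qed.

Definition prefw (d : letter) (w : word) : bool := match w with u :: _ => letter_eqb d u | nil => false end.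

Lemma prefix_rep x s k d h t m w : (1 <= k)%nat -> (1 <= m)%nat -> gen_eqb (fst d) x = false ->
  (match w with u :: _ => gen_eqb (fst u) h = false | nil => True end) ->
  prefixb (repeat (x,s) k ++ d :: nil) (repeat (h,t) m ++ w) =
  gen_eqb h x && Bool.eqb s t && Nat.eqb k m && prefw d w.
Proof.
  intros Hk Hm Hd Hw. revert m Hm. induction k as [|k IH]; [lia|]. intros m Hm.
  destruct m as [|m]; [lia|]. simpl repeat. simpl app. cbn [prefixb].
  destruct k as [|k].
  - simpl. destruct m as [|m].
    + simpl. destruct w as [|u w]; simpl; destruct x, h, s, t; simpl; try destruct (letter_eqb d u); reflexivity.
    + simpl. destruct d as [dg ds]. simpl in Hd. destruct x, h, s, t, dg, ds; simpl in *; auto; discriminate.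
  - destruct m as [|m].
    + simpl. destruct w as [|u w]; simpl; [rewrite !andb_false_r; reflexivity|].
      destruct u as [ug us]. simpl in Hw. destruct x, h, s, t, ug, us; simpl in *; auto; discriminate.
    + rewrite (IH ltac:(lia) (S m) ltac:(lia)).
      destruct x, h, s, t; simpl; auto.
Qed.

Definition pat x y k (e1 e2 : bool) : word := (y,e1) :: repeat (x,false) k ++ (y,e2) :: nil.
Definition Cgen x y k g : R :=
  Ccount (pat x y k false false) g + Ccount (pat x y k false true) g
  + Ccount (pat x y k true false) g + Ccount (pat x y k true true) g.

Lemma Ca_Cgen k g : Ca k g = Cgen Ga Gb k g.
Proof. reflexivity. Qed.
Lemma Cb_Cgen k g : Cb k g = Cgen Gb Ga k g.
Proof. reflexivity. Qed.

Lemma winv_pat x y k e1 e2 : winv (pat x y k e1 e2) = (y, negb e2) :: repeat (x,true) k ++ (y, negb e1) :: nil.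
Proof.
  unfold winv, pat. simpl. rewrite map_app, rev_app_distr. simpl.
  rewrite map_repeat, rev_repeat. reflexivity.
Qed.

Definition b2R (b : bool) : R := if b then 1 else 0.

Lemma Ccount_cons a p b q z g : winv (a :: p) = b :: q ->
  Ccount (a :: p) (z :: g) = Ccount (a :: p) g + b2R (prefixb (a::p) (z::g)) - b2R (prefixb (b::q) (z::g)).
Proof.
  intro E. unfold Ccount. rewrite E. unfold hcount. cbn [occ].
  rewrite !plus_INR. unfold b2R. destruct (prefixb (a::p) (z::g)), (prefixb (b::q) (z::g)); simpl; ring.
Qed.

Lemma Ccount_pat x y k e1 e2 z g :
  Ccount (pat x y k e1 e2) (z :: g) = Ccount (pat x y k e1 e2) g
   + b2R (prefixb (repeat (x,false) k ++ (y,e2) :: nil) g && letter_eqb (y,e1) z)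
   - b2R (prefixb (repeat (x,true) k ++ (y,negb e1) :: nil) g && letter_eqb (y,negb e2) z).
Proof.
  pose proof (Ccount_cons _ _ _ _ z g (winv_pat x y k e1 e2)) as H. unfold pat in H |- *. etransitivity; [exact H|].
  cbn [prefixb]. rewrite (andb_comm (letter_eqb (y,e1) z)), (andb_comm (letter_eqb (y,negb e2) z)).
  reflexivity.
Qed.

Definition Qf x y k (z : letter) g : R :=
  match syllables g with
  | (h,j) :: _ :: _ => if gen_eqb h x && gen_eqb (fst z) y
                       then b2R (Z.eqb j (Z.of_nat k)) - b2R (Z.eqb j (- Z.of_nat k)) else 0
  | _ => 0
  end.

Lemma Zeq_pp m k : Z.eqb (Z.of_nat m) (Z.of_nat k) = Nat.eqb k m.
Proof. destruct (Z.eqb_spec (Z.of_nat m) (Z.of_nat k)), (Nat.eqb_spec k m); auto; lia. Qed.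
Lemma Zeq_nn m k : Z.eqb (- Z.of_nat m) (- Z.of_nat k) = Nat.eqb k m.
Proof. destruct (Z.eqb_spec (- Z.of_nat m) (- Z.of_nat k)), (Nat.eqb_spec k m); auto; lia. Qed.
Lemma Zeq_pn m k : (1 <= m)%nat -> Z.eqb (Z.of_nat m) (- Z.of_nat k) = false.
Proof. intro. destruct (Z.eqb_spec (Z.of_nat m) (- Z.of_nat k)); auto; lia. Qed.
Lemma Zeq_np m k : (1 <= m)%nat -> Z.eqb (- Z.of_nat m) (Z.of_nat k) = false.
Proof. intro. destruct (Z.eqb_spec (- Z.of_nat m) (Z.of_nat k)); auto; lia. Qed.

Lemma Cgen_cons x y k z g : gen_eqb y x = false -> (1 <= k)%nat -> reduced (z :: g) ->
  Cgen x y k (z :: g) = Cgen x y k g + Qf x y k z g.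
Proof.
  intros Hxy Hk Hg. unfold Cgen.
  rewrite !Ccount_pat.
  unfold Qf. destruct (syllables g) as [|[h j] rest] eqn:Es.
  - apply syllables_nil in Es. subst g. destruct k as [|k]; [lia|]. simpl.
    unfold b2R. ring.
  - destruct (decomp g (reduced_tl _ _ Hg) h j rest Es) as [t [m [w [Hm [Ej [Eg Hr]]]]]].
    rewrite Eg.
    assert (Hw : match w with u :: _ => gen_eqb (fst u) h = false | nil => True end).
    { destruct Hr as [[_ ->]|[h' [j' [rest' [u [w' [_ [-> [<- ?]]]]]]]]]; auto. }
    rewrite !prefix_rep by (auto; simpl; auto).
    subst j. destruct Hr as [[-> ->]|[h' [j' [rest' [u [w' [-> [-> [Eu Hh]]]]]]]]].
    + unfold prefw. rewrite !andb_false_r. cbn [andb]. unfold b2R. ring.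
    + destruct t; [rewrite Zeq_nn, Zeq_np by lia|rewrite Zeq_pp, Zeq_pn by lia];
      destruct (Nat.eqb k m); destruct u as [ug us]; simpl in Eu; subst ug; destruct z as [zg zs];
      destruct x, y, h, h', zg, zs, us; simpl in *; try discriminate; unfold b2R; ring.
Qed.


Fixpoint sumF (F : nat -> R) (N : nat) : R :=
  match N with O => 0 | S N' => sumF F N' + F (S N') end.

Lemma sumF_ext F G N : (forall k, (1 <= k <= N)%nat -> F k = G k) -> sumF F N = sumF G N.
Proof. induction N; simpl; auto. intro H. rewrite IHN by (intros; apply H; lia). rewrite H by lia. auto. Qed.
Lemma sumF_plus F G N : sumF (fun k => F k + G k) N = sumF F N + sumF G N.
Proof. induction N; simpl; [lra|]. rewrite IHN; lra. Qed.
Lemma sumF_zero N : sumF (fun _ => 0) N = 0.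
Proof. induction N; simpl; auto. rewrite IHN; lra. Qed.
Lemma sum_ind f m N : (1 <= m <= N)%nat -> sumF (fun k => f k * b2R (Nat.eqb k m)) N = f m.
Proof.
  induction N; intro H; [lia|]. cbn [sumF]. destruct (Nat.eqb_spec (S N) m).
  - subst m. rewrite (sumF_ext _ (fun _ => 0)). rewrite sumF_zero. unfold b2R; lra.
    intros k Hk. destruct (Nat.eqb_spec k (S N)); [lia|]. unfold b2R; lra.
  - rewrite IHN by lia. unfold b2R; lra.
Qed.

Section Inner.
Variables fA fB : Z -> R.
Definition inner (g : word) : R :=
  match syllables g with nil => 0 | _ :: rest => sumv fA fB (removelast rest) end.

Hypothesis altA : forall k, fA (- k)%Z = - fA k.
Hypothesis altB : forall k, fB (- k)%Z = - fB k.

Lemma Ccount_nil p : Ccount p nil = 0.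
Proof. unfold Ccount, hcount. destruct p; destruct (winv _); simpl; lra. Qed.

Lemma series_nil k : series_term fA fB k nil = 0.
Proof. unfold series_term. rewrite Ca_Cgen, Cb_Cgen. unfold Cgen. rewrite !Ccount_nil. ring. Qed.

Lemma series_cons k z g : (1 <= k)%nat -> reduced (z :: g) ->
  series_term fA fB k (z :: g) = series_term fA fB k g
   + (fA (Z.of_nat k) * Qf Ga Gb k z g + fB (Z.of_nat k) * Qf Gb Ga k z g).
Proof.
  intros Hk Hg. unfold series_term. rewrite !Ca_Cgen, !Cb_Cgen.
  rewrite !Cgen_cons by (auto; reflexivity). change (Ca k g) with (Cgen Ga Gb k g); change (Cb k g) with (Cgen Gb Ga k g); ring.
Qed.

Lemma lemmaA g : reduced g -> forall N, (length g <= N)%nat ->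
  sumF (fun k => series_term fA fB k g) N = inner g.
Proof.
  induction g as [|z g IH]; intros Hg N HN.
  - rewrite (sumF_ext _ (fun _ => 0)) by (intros; apply series_nil). rewrite sumF_zero. reflexivity.
  - rewrite (sumF_ext _ (fun k => series_term fA fB k g
      + (fA (Z.of_nat k) * Qf Ga Gb k z g + fB (Z.of_nat k) * Qf Gb Ga k z g)))
      by (intros; apply series_cons; auto; lia).
    rewrite sumF_plus, IH by (simpl in HN; eauto using reduced_tl; lia).
    unfold Qf, inner. rewrite syllables_cons.
    destruct (syllables g) as [|[h j] rest] eqn:Es.
    + rewrite sumF_ext with (G := fun _ => 0) by (intros; ring). rewrite sumF_zero.
      simpl. ring.
    + destruct (decomp g (reduced_tl _ _ Hg) h j rest Es) as [t [m [w [Hm [Ej [Eg Hr]]]]]].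
      assert (HmN : (m <= N)%nat).
      { rewrite Eg in HN. simpl in HN. rewrite length_app, repeat_length in HN. lia. }
      destruct Hr as [[-> ->]|[h' [j' [rest' [u [w' [-> [-> [Eu Hh]]]]]]]]].
      * rewrite sumF_ext with (G := fun _ => 0) by (intros; ring). rewrite sumF_zero.
        simpl. destruct (gen_eqb (fst z) h); simpl; ring.
      * simpl. destruct (gen_eqb (fst z) h) eqn:Ezh.
        -- apply gen_eqb_eq in Ezh. rewrite Ezh.
           rewrite sumF_ext with (G := fun _ => 0). rewrite sumF_zero. simpl. ring.
           intros k _. destruct h; simpl; ring.
        -- simpl. subst j.
           assert (Hb : forall k, (1 <= k)%nat ->
             b2R (Z.eqb (if t then (- Z.of_nat m)%Z else Z.of_nat m) (Z.of_nat k))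
             - b2R (Z.eqb (if t then (- Z.of_nat m)%Z else Z.of_nat m) (- Z.of_nat k))
             = (if t then -1 else 1) * b2R (Nat.eqb k m)).
           { intros k Hk. destruct t; [rewrite Zeq_nn, Zeq_np by lia|rewrite Zeq_pp, Zeq_pn by lia];
             unfold b2R; destruct (Nat.eqb k m); ring. }
           destruct h, (fst z); simpl in Ezh; try discriminate; simpl.
           ++ rewrite sumF_ext with (G := fun k => (if t then - fA (Z.of_nat k) else fA (Z.of_nat k)) * b2R (Nat.eqb k m)).
              rewrite sum_ind by lia. unfold sv; simpl. destruct t; [rewrite altA|]; ring.
              intros k Hk. rewrite Hb by lia. destruct t; ring.
           ++ rewrite sumF_ext with (G := fun k => (if t then - fB (Z.of_nat k) else fB (Z.of_nat k)) * b2R (Nat.eqb k m)).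
              rewrite sum_ind by lia. unfold sv; simpl. destruct t; [rewrite altB|]; ring.
              intros k Hk. rewrite Hb by lia. destruct t; ring.
Qed.
End Inner.


Lemma Rabs_div_le u c e : 0 < c -> Rabs u <= c * e -> Rabs (u / c) <= e.
Proof.
  intros Hc H. unfold Rdiv. rewrite Rabs_mult, Rabs_inv, (Rabs_pos_eq c) by lra.
  apply (Rmult_le_reg_l c); [lra|]. field_simplify; [|lra]. lra.
Qed.

Lemma INRS_pos n : 0 < INR (S n).
Proof. apply lt_0_INR; lia. Qed.

Lemma cv_bound_0 (v : nat -> R) B : (forall n, Rabs (v n) <= B / INR (S n)) -> Un_cv v 0.
Proof.
  intros H eps He. destruct (INR_unbounded (Rabs B / eps)) as [N HN].
  exists N. intros n Hn. unfold Rdist. rewrite Rminus_0_r.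
  eapply Rle_lt_trans; [apply H|].
  assert (HN' : INR N <= INR n) by (apply le_INR; lia).
  assert (HS : INR (S n) = INR n + 1) by (rewrite S_INR; auto).
  pose proof (pos_INR N).
  apply (Rmult_lt_reg_r (INR (S n))); [apply INRS_pos|].
  unfold Rdiv. rewrite Rmult_assoc, Rinv_l by (apply Rgt_not_eq, INRS_pos). rewrite Rmult_1_r.
  assert (Rabs B / eps * eps = Rabs B) by (field; lra).
  assert (Rabs B / eps * eps < INR (S n) * eps).
  { apply Rmult_lt_compat_r; lra. }
  pose proof (Rle_abs B). lra.
Qed.

Lemma cv_le_bound (u : nat -> R) l c : Un_cv u l -> (forall n, Rabs (u n) <= c) -> Rabs l <= c.
Proof.
  intros Hu Hc. destruct (Rle_dec (Rabs l) c) as [|Hn]; auto. exfalso.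
  destruct (Hu (Rabs l - c)) as [N HN]; [lra|].
  specialize (HN N (le_n _)). specialize (Hc N). unfold Rdist in HN.
  pose proof (Rabs_triang_inv l (u N)). rewrite Rabs_minus_sym in HN. lra.
Qed.

Lemma cv_const c : Un_cv (fun _ => c) c.
Proof. intros eps He. exists 0%nat. intros. unfold Rdist. rewrite Rminus_diag, Rabs_R0. auto. Qed.

Definition quasi_on (F : word -> R) (D : R) : Prop :=
  forall g h, reduced g -> reduced h -> Rabs (F (mul g h) - F g - F h) <= D.

Lemma homog_cauchy F g D : quasi_on F D -> Cauchy_crit (fun n => F (Defs.pow g (S n)) / INR (S n)).
Proof.
  intros HF. set (a n := F (Defs.pow g n)).
  assert (D0 : 0 <= D).
  { eapply Rle_trans; [apply Rabs_pos|]. apply (HF nil nil); exact I. }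
  assert (Hk : forall n k, (1 <= k)%nat -> Rabs (a (k * n)%nat - INR k * a n) <= INR k * D).
  { intros n k Hk. induction k as [|k IH]; [lia|]. destruct k as [|k].
    - simpl. rewrite Nat.add_0_r. replace (a n - 1 * a n) with 0 by ring. rewrite Rabs_R0. lra.
    - specialize (IH ltac:(lia)).
      assert (E : (S (S k) * n = S k * n + n)%nat) by lia.
      unfold a in *. rewrite E, pow_add.
      pose proof (HF _ _ (pow_reduced g (S k * n)) (pow_reduced g n)).
      rewrite (S_INR (S k)).
      replace (F (mul (Defs.pow g (S k * n)) (Defs.pow g n)) - (INR (S k) + 1) * F (Defs.pow g n))
        with ((F (mul (Defs.pow g (S k * n)) (Defs.pow g n)) - F (Defs.pow g (S k * n)) - F (Defs.pow g n))
              + (F (Defs.pow g (S k * n)) - INR (S k) * F (Defs.pow g n))) by ring.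
      eapply Rle_trans; [apply Rabs_triang|]. lra. }
  assert (Hpq : forall p q, Rabs (a (S p) / INR (S p) - a (S q) / INR (S q)) <= D / INR (S p) + D / INR (S q)).
  { intros p q.
    assert (H1 : Rabs (a (S p * S q)%nat / (INR (S p) * INR (S q)) - a (S p) / INR (S p)) <= D / INR (S p)).
    { rewrite Nat.mul_comm. pose proof (Hk (S p) (S q) ltac:(lia)) as H.
      replace (a (S q * S p)%nat / (INR (S p) * INR (S q)) - a (S p) / INR (S p))
        with ((a (S q * S p)%nat - INR (S q) * a (S p)) / (INR (S p) * INR (S q)))
        by (field; split; apply Rgt_not_eq, INRS_pos).
      apply Rabs_div_le. apply Rmult_lt_0_compat; apply INRS_pos.
      replace (INR (S p) * INR (S q) * (D / INR (S p))) with (INR (S q) * D)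
        by (field; apply Rgt_not_eq, INRS_pos). exact H. }
    assert (H2 : Rabs (a (S p * S q)%nat / (INR (S p) * INR (S q)) - a (S q) / INR (S q)) <= D / INR (S q)).
    { pose proof (Hk (S q) (S p) ltac:(lia)) as H.
      replace (a (S p * S q)%nat / (INR (S p) * INR (S q)) - a (S q) / INR (S q))
        with ((a (S p * S q)%nat - INR (S p) * a (S q)) / (INR (S p) * INR (S q)))
        by (field; split; apply Rgt_not_eq, INRS_pos).
      apply Rabs_div_le. apply Rmult_lt_0_compat; apply INRS_pos.
      replace (INR (S p) * INR (S q) * (D / INR (S q))) with (INR (S p) * D)
        by (field; apply Rgt_not_eq, INRS_pos). exact H. }
    set (c := a (S p * S q)%nat / (INR (S p) * INR (S q))) in *.
    replace (a (S p) / INR (S p) - a (S q) / INR (S q))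
      with (- (c - a (S p) / INR (S p)) + (c - a (S q) / INR (S q))) by ring.
    eapply Rle_trans; [apply Rabs_triang|]. rewrite Rabs_Ropp. lra. }
  intros eps He. destruct (INR_unbounded (2 * D / eps)) as [N HN].
  exists N. intros n m Hn Hm. unfold Rdist. eapply Rle_lt_trans; [apply (Hpq n m)|].
  assert (Hb : forall r, (N <= r)%nat -> D / INR (S r) < eps / 2).
  { intros r Hr. apply (Rmult_lt_reg_r (INR (S r))); [apply INRS_pos|].
    unfold Rdiv at 1. rewrite Rmult_assoc, Rinv_l by (apply Rgt_not_eq, INRS_pos). rewrite Rmult_1_r.
    assert (INR N <= INR r) by (apply le_INR; lia). rewrite S_INR.
    assert (2 * D / eps * eps = 2 * D) by (field; lra).
    assert (2 * D / eps * eps < INR N * eps) by (apply Rmult_lt_compat_r; lra).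
    nra. }
  pose proof (Hb n Hn); pose proof (Hb m Hm). lra.
Qed.

Lemma homog_exists F g : (exists D, quasi_on F D) -> { l | homog F g l }.
Proof.
  intro H. apply R_complete. destruct H as [D HD]. eapply homog_cauchy; eauto.
Qed.

Lemma homog_transfer F G g l B : homog F g l ->
  (forall w, reduced w -> Rabs (F w - G w) <= B) -> homog G g l.
Proof.
  intros H HB. unfold homog in *.
  assert (Hv : Un_cv (fun n => (G (Defs.pow g (S n)) - F (Defs.pow g (S n))) / INR (S n)) 0).
  { apply (cv_bound_0 _ B). intros n. apply Rabs_div_le; [apply INRS_pos|].
    rewrite Rabs_minus_sym. field_simplify; [|apply Rgt_not_eq, INRS_pos]. apply HB, pow_reduced. }
  pose proof (CV_plus _ _ _ _ H Hv). rewrite Rplus_0_r in H0.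
  eapply Un_cv_ext; [|exact H0]. intro n. simpl. field. apply Rgt_not_eq, INRS_pos.
Qed.

Lemma homog_plus F G g l1 l2 : homog F g l1 -> homog G g l2 -> homog (fun w => F w + G w) g (l1 + l2).
Proof.
  intros H1 H2. pose proof (CV_plus _ _ _ _ H1 H2). eapply Un_cv_ext; [|exact H].
  intro n. simpl. field. apply Rgt_not_eq, INRS_pos.
Qed.

Lemma homog_scal F g l c : homog F g l -> homog (fun w => c * F w) g (c * l).
Proof.
  intros H1. pose proof (CV_mult _ _ _ _ (cv_const c) H1). eapply Un_cv_ext; [|exact H].
  intro n. simpl. field. apply Rgt_not_eq, INRS_pos.
Qed.

Lemma homog_minus F G g l1 l2 : homog F g l1 -> homog G g l2 -> homog (fun w => F w - G w) g (l1 - l2).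
Proof.
  intros H1 H2. pose proof (CV_minus _ _ _ _ H1 H2). eapply Un_cv_ext; [|exact H].
  intro n. simpl. field. apply Rgt_not_eq, INRS_pos.
Qed.

Lemma homog_ext F G g l : (forall w, reduced w -> F w = G w) -> homog F g l -> homog G g l.
Proof.
  intros E H. eapply Un_cv_ext; [|exact H]. intro n. simpl. rewrite E by apply pow_reduced. auto.
Qed.

Lemma homog_zero g : homog (fun _ => 0) g 0.
Proof. eapply Un_cv_ext; [|apply cv_const]. intro n. simpl. unfold Rdiv. ring. Qed.


Lemma sumv_removelast_last fA fB s rest :
  sumv fA fB (s :: rest) = sv fA fB s + sumv fA fB (removelast rest) + (match rest with nil => 0 | _ => sv fA fB (last rest s) end).
Proof.
  simpl. destruct rest as [|r rest]; [simpl; ring|].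
  rewrite (app_removelast_last s (l := r :: rest)) at 1 by discriminate.
  rewrite sumv_app. simpl. ring.
Qed.

Lemma split_inner fA fB M : (forall s, Rabs (sv fA fB s) <= M) ->
  forall g, Rabs (split_qm fA fB g - inner fA fB g) <= 2 * M.
Proof.
  intros HM g. assert (M0 : 0 <= M) by (eapply Rle_trans; [apply Rabs_pos|apply (HM (Ga,0%Z))]).
  rewrite split_sumv. unfold inner. destruct (syllables g) as [|s rest].
  - simpl. rewrite Rminus_0_r, Rabs_R0. lra.
  - rewrite sumv_removelast_last. destruct rest as [|r rest].
    + replace (sv fA fB s + sumv fA fB (removelast nil) + 0 - sumv fA fB (removelast nil)) with (sv fA fB s) by ring.
      pose proof (HM s). lra.
    + replace (sv fA fB s + sumv fA fB (removelast (r :: rest)) + sv fA fB (last (r :: rest) s) -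
               sumv fA fB (removelast (r :: rest))) with (sv fA fB s + sv fA fB (last (r :: rest) s)) by ring.
      eapply Rle_trans; [apply Rabs_triang|]. pose proof (HM s). pose proof (HM (last (r::rest) s)). lra.
Qed.

Lemma inner_quasi fA fB M : (forall s, Rabs (sv fA fB s) <= M) ->
  (forall k, fA (- k)%Z = - fA k) -> (forall k, fB (- k)%Z = - fB k) ->
  quasi_on (inner fA fB) (15 * M).
Proof.
  intros HM aA aB g h Hg Hh.
  pose proof (split_qm_quasi fA fB M HM aA aB g h Hg Hh).
  pose proof (split_inner fA fB M HM (mul g h)).
  pose proof (split_inner fA fB M HM g). pose proof (split_inner fA fB M HM h).
  set (s1 := split_qm fA fB (mul g h)) in *. set (s2 := split_qm fA fB g) in *. set (s3 := split_qm fA fB h) in *.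
  set (i1 := inner fA fB (mul g h)) in *. set (i2 := inner fA fB g) in *. set (i3 := inner fA fB h) in *.
  replace (i1 - i2 - i3) with ((s1 - s2 - s3) - (s1 - i1) + (s2 - i2) + (s3 - i3)) by ring.
  eapply Rle_trans; [apply Rabs_triang|].
  eapply Rle_trans; [apply Rplus_le_compat_r; apply Rabs_triang|].
  unfold Rminus at 1.
  eapply Rle_trans; [do 2 apply Rplus_le_compat_r; apply Rabs_triang|]. rewrite Rabs_Ropp. lra.
Qed.

Lemma sumv_lin fA fB f1 g1 f2 g2 : (forall j, fA j = f1 j + f2 j) -> (forall j, fB j = g1 j + g2 j) ->
  forall l, sumv fA fB l = sumv f1 g1 l + sumv f2 g2 l.
Proof.
  intros HA HB l. induction l as [|[h j] l IH]; simpl; [ring|]. rewrite IH. unfold sv; simpl.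
  destruct h; [rewrite HA|rewrite HB]; ring.
Qed.

Lemma inner_lin fA fB f1 g1 f2 g2 : (forall j, fA j = f1 j + f2 j) -> (forall j, fB j = g1 j + g2 j) ->
  forall w, inner fA fB w = inner f1 g1 w + inner f2 g2 w.
Proof.
  intros HA HB w. unfold inner. destruct (syllables w); [ring|]. apply sumv_lin; auto.
Qed.

Definition abssum (l : list (gen * Z)) : R := fold_right (fun s acc => IZR (Z.abs (snd s)) + acc) 0 l.

Lemma abssum_nonneg l : 0 <= abssum l.
Proof. induction l; simpl; [lra|]. pose proof (IZR_le 0 _ (Z.abs_nonneg (snd a))). lra. Qed.

Lemma abssum_removelast l : abssum (removelast l) <= abssum l.
Proof.
  induction l as [|a l IH]; simpl; [lra|]. destruct l as [|b l].
  - simpl. pose proof (IZR_le 0 _ (Z.abs_nonneg (snd a))). lra.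
  - simpl in *. lra.
Qed.

Lemma abssum_syllables w : abssum (syllables w) <= INR (length w).
Proof.
  induction w as [|x w IH]; [simpl; lra|]. cbn [length]. rewrite S_INR. rewrite syllables_cons. unfold step.
  destruct (syllables w) as [|[h k] S]; simpl in *.
  - destruct x as [a s]; destruct s; simpl; lra.
  - destruct (gen_eqb (fst x) h); simpl.
    + assert (Z.abs (letter_exp x + k) <= 1 + Z.abs k)%Z.
      { destruct x as [a s]; destruct s; unfold letter_exp; cbn [snd]; lia. }
      apply IZR_le in H. rewrite plus_IZR in H. lra.
    + destruct x as [a s]; destruct s; simpl; lra.
Qed.

Lemma sumv_bound fA fB c l : (forall s, Rabs (sv fA fB s) <= c * IZR (Z.abs (snd s))) -> 0 <= c ->
  Rabs (sumv fA fB l) <= c * abssum l.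
Proof.
  intros H c0. induction l as [|s l IH]; simpl.
  - rewrite Rabs_R0. lra.
  - eapply Rle_trans; [apply Rabs_triang|]. pose proof (H s). lra.
Qed.

Lemma inner_bound fA fB c w : (forall s, Rabs (sv fA fB s) <= c * IZR (Z.abs (snd s))) -> 0 <= c ->
  Rabs (inner fA fB w) <= c * INR (length w).
Proof.
  intros H c0. unfold inner. pose proof (abssum_syllables w).
  destruct (syllables w) as [|s rest].
  - rewrite Rabs_R0. pose proof (pos_INR (length w)). nra.
  - eapply Rle_trans; [apply (sumv_bound _ _ c); auto|].
    apply Rmult_le_compat_l; auto. simpl in H0.
    pose proof (abssum_removelast rest). pose proof (IZR_le 0 _ (Z.abs_nonneg (snd s))). lra.
Qed.


Lemma sv_bound fA fB MA MB : (forall k, Rabs (fA k) <= MA) -> (forall k, Rabs (fB k) <= MB) ->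
  forall s, Rabs (sv fA fB s) <= Rmax MA MB.
Proof.
  intros HA HB [h j]. unfold sv; simpl. destruct h.
  - eapply Rle_trans; [apply HA|apply Rmax_l].
  - eapply Rle_trans; [apply HB|apply Rmax_r].
Qed.

Lemma sum_f_R0_sumF F n : sum_f_R0 (fun k => F (S k)) n = sumF F (S n).
Proof. induction n; simpl; [ring|]. rewrite IHn. simpl. ring. Qed.

Lemma sumF_trunc F K N : (forall k, (K < k)%nat -> F k = 0) -> (K <= N)%nat -> sumF F N = sumF F K.
Proof.
  intros H HN. induction N; [replace K with 0%nat by lia; auto|].
  destruct (Nat.eq_dec K (S N)) as [->|Hne]; auto.
  simpl. rewrite IHN by lia. rewrite H by lia. ring.
Qed.

Definition ek (k : nat) (j : Z) : R :=
  if Z.eqb j (Z.of_nat k) then 1 else if Z.eqb j (- Z.of_nat k) then -1 else 0.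

Lemma ek_alt k : (1 <= k)%nat -> forall j, ek k (- j)%Z = - ek k j.
Proof.
  intros Hk j. unfold ek.
  destruct (Z.eqb_spec (-j) (Z.of_nat k)), (Z.eqb_spec j (Z.of_nat k)),
           (Z.eqb_spec (-j) (- Z.of_nat k)), (Z.eqb_spec j (- Z.of_nat k)); try lia; ring.
Qed.

Lemma ek_bound k j : Rabs (ek k j) <= 1.
Proof. unfold ek. destruct (Z.eqb _ _); [|destruct (Z.eqb _ _)];
  unfold Rabs; destruct Rcase_abs; lra. Qed.

Lemma zero_alt : forall j : Z, (fun _ : Z => 0) (- j)%Z = - (fun _ : Z => 0) j.
Proof. intros; simpl; ring. Qed.

Lemma ek_nat k k' : (1 <= k')%nat -> ek k (Z.of_nat k') = b2R (Nat.eqb k' k).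
Proof.
  intro H. unfold ek, b2R. destruct (Z.eqb_spec (Z.of_nat k') (Z.of_nat k)), (Nat.eqb_spec k' k); try lia; auto.
  destruct (Z.eqb_spec (Z.of_nat k') (- Z.of_nat k)); try lia; auto.
Qed.

Lemma Ca_inner k w : (1 <= k)%nat -> reduced w -> Ca k w = inner (ek k) (fun _ => 0) w.
Proof.
  intros Hk Hw. rewrite <- (lemmaA (ek k) (fun _ => 0) (ek_alt k Hk) zero_alt w Hw (Nat.max k (length w))) by lia.
  rewrite (sumF_ext _ (fun k' => Ca k' w * b2R (Nat.eqb k' k))).
  - rewrite sum_ind by lia. auto.
  - intros k' Hk'. unfold series_term. rewrite ek_nat by lia. ring.
Qed.

Lemma Cb_inner k w : (1 <= k)%nat -> reduced w -> Cb k w = inner (fun _ => 0) (ek k) w.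
Proof.
  intros Hk Hw. rewrite <- (lemmaA (fun _ => 0) (ek k) zero_alt (ek_alt k Hk) w Hw (Nat.max k (length w))) by lia.
  rewrite (sumF_ext _ (fun k' => Cb k' w * b2R (Nat.eqb k' k))).
  - rewrite sum_ind by lia. auto.
  - intros k' Hk'. unfold series_term. rewrite ek_nat by lia. ring.
Qed.

Lemma winv_winv w : winv (winv w) = w.
Proof. unfold winv. rewrite map_rev, rev_involutive, map_map.
  induction w as [|x w IH]; simpl; auto. rewrite letter_inv_inv, IH. auto. Qed.

Lemma Ccount_self p w : winv p = p -> Ccount p w = 0.
Proof. intro E. unfold Ccount. rewrite E. ring. Qed.
Lemma Ccount_inv p w : Ccount (winv p) w = - Ccount p w.
Proof. unfold Ccount. rewrite winv_winv. ring. Qed.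

Lemma Ca0 w : Ca 0 w = 0.
Proof.
  unfold Ca. rewrite (Ccount_self (bw ++ gpow Ga 0 ++ binv)) by reflexivity.
  rewrite (Ccount_self (binv ++ gpow Ga 0 ++ bw)) by reflexivity.
  replace (binv ++ gpow Ga 0 ++ binv) with (winv (bw ++ gpow Ga 0 ++ bw)) by reflexivity.
  rewrite Ccount_inv. ring.
Qed.
Lemma Cb0 w : Cb 0 w = 0.
Proof.
  unfold Cb. rewrite (Ccount_self (aw ++ gpow Gb 0 ++ ainv)) by reflexivity.
  rewrite (Ccount_self (ainv ++ gpow Gb 0 ++ aw)) by reflexivity.
  replace (ainv ++ gpow Gb 0 ++ ainv) with (winv (aw ++ gpow Gb 0 ++ aw)) by reflexivity.
  rewrite Ccount_inv. ring.
Qed.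

Lemma quasi_ext F G D : (forall w, reduced w -> F w = G w) -> quasi_on F D -> quasi_on G D.
Proof. intros E H g h Hg Hh. rewrite <- !E by (auto; apply mul_reduced). auto. Qed.

Lemma Ca_quasi k : exists D, quasi_on (Ca k) D.
Proof.
  destruct k as [|k].
  - exists 0. intros g h _ _. rewrite !Ca0. replace (0-0-0) with 0 by ring. rewrite Rabs_R0; lra.
  - exists (15 * Rmax 1 0). apply (quasi_ext (inner (ek (S k)) (fun _ => 0))).
    + intros; symmetry; apply Ca_inner; auto; lia.
    + apply inner_quasi; [|apply ek_alt; lia|apply zero_alt].
      apply sv_bound; [apply ek_bound|intros; rewrite Rabs_R0; lra].
Qed.

Lemma Cb_quasi k : exists D, quasi_on (Cb k) D.
Proof.
  destruct k as [|k].
  - exists 0. intros g h _ _. rewrite !Cb0. replace (0-0-0) with 0 by ring. rewrite Rabs_R0; lra.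
  - exists (15 * Rmax 0 1). apply (quasi_ext (inner (fun _ => 0) (ek (S k)))).
    + intros; symmetry; apply Cb_inner; auto; lia.
    + apply inner_quasi; [|apply zero_alt|apply ek_alt; lia].
      apply sv_bound; [intros; rewrite Rabs_R0; lra|apply ek_bound].
Qed.


Section Main.
Variables fA fB : Z -> R.
Hypothesis aA : forall k, fA (- k)%Z = - fA k.
Hypothesis aB : forall k, fB (- k)%Z = - fB k.
Variable M : R.
Hypothesis HA : forall k, Rabs (fA k) <= M.
Hypothesis HB : forall k, Rabs (fB k) <= M.

Lemma HM : forall s, Rabs (sv fA fB s) <= M.
Proof. intros [h j]; unfold sv; simpl; destruct h; auto. Qed.

Lemma M0 : 0 <= M.
Proof. eapply Rle_trans; [apply Rabs_pos|apply (HA 0%Z)]. Qed.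

Definition T (K : nat) (w : word) : R := sumF (fun k => series_term fA fB k w) K.

Definition tr (f : Z -> R) (K : nat) (j : Z) : R := if Z.leb (Z.abs j) (Z.of_nat K) then f j else 0.
Definition tl (f : Z -> R) (K : nat) (j : Z) : R := if Z.leb (Z.abs j) (Z.of_nat K) then 0 else f j.

Lemma tr_alt f K : (forall k, f (- k)%Z = - f k) -> forall j, tr f K (- j)%Z = - tr f K j.
Proof. intros H j. unfold tr. rewrite Z.abs_opp. destruct (Z.leb _ _); [apply H|ring]. Qed.

Lemma inner_T K w : reduced w -> inner (tr fA K) (tr fB K) w = T K w.
Proof.
  intro Hw. rewrite <- (lemmaA _ _ (tr_alt fA K aA) (tr_alt fB K aB) w Hw (Nat.max K (length w))) by lia.
  rewrite (sumF_trunc _ K) by (try lia; intros k Hk; unfold series_term, tr;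
    replace (Z.leb (Z.abs (Z.of_nat k)) (Z.of_nat K)) with false by (symmetry; apply Z.leb_gt; lia); ring).
  unfold T. apply sumF_ext. intros k Hk. unfold series_term, tr.
  replace (Z.leb (Z.abs (Z.of_nat k)) (Z.of_nat K)) with true by (symmetry; apply Z.leb_le; lia). auto.
Qed.

Lemma inner_split_T K w : reduced w -> inner fA fB w = T K w + inner (tl fA K) (tl fB K) w.
Proof.
  intro Hw. rewrite (inner_lin fA fB (tr fA K) (tr fB K) (tl fA K) (tl fB K)).
  - rewrite inner_T; auto.
  - intro j; unfold tr, tl; destruct (Z.leb _ _); ring.
  - intro j; unfold tr, tl; destruct (Z.leb _ _); ring.
Qed.

Lemma tl_bound K : forall s, Rabs (sv (tl fA K) (tl fB K) s) <= M / INR (S K) * IZR (Z.abs (snd s)).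
Proof.
  intros [h j]. pose proof M0. pose proof (INRS_pos K).
  assert (Hge : 0 <= M / INR (S K)) by (apply Rmult_le_pos; [lra|left; apply Rinv_0_lt_compat; lra]).
  pose proof (IZR_le 0 _ (Z.abs_nonneg j)).
  unfold sv, tl; cbn [fst snd]. destruct (Z.leb (Z.abs j) (Z.of_nat K)) eqn:E.
  - destruct h; rewrite Rabs_R0; apply Rmult_le_pos; auto.
  - apply Z.leb_gt in E.
    assert (Hj : INR (S K) <= IZR (Z.abs j)).
    { rewrite INR_IZR_INZ. apply IZR_le. lia. }
    assert (M <= M / INR (S K) * IZR (Z.abs j)).
    { replace M with (M / INR (S K) * INR (S K)) at 1 by (field; lra).
      apply Rmult_le_compat_l; auto. }
    destruct h; eapply Rle_trans; [apply HA| |apply HB|]; lra.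
Qed.

Variable ca cb : nat -> R.
Variable g : word.
Hypothesis Hca : forall k, homog (Ca k) g (ca k).
Hypothesis Hcb : forall k, homog (Cb k) g (cb k).
Variable l : R.
Hypothesis Hl : homog (split_qm fA fB) g l.

Definition P (K : nat) : R := sumF (fun k => fA (Z.of_nat k) * ca k + fB (Z.of_nat k) * cb k) K.

Lemma homog_T K : homog (T K) g (P K).
Proof.
  induction K.
  - eapply homog_ext; [|apply homog_zero]. intros; reflexivity.
  - unfold T, P. cbn [sumF].
    apply (homog_plus (T K) (fun w => series_term fA fB (S K) w)); auto.
    apply (homog_plus (fun w => fA (Z.of_nat (S K)) * Ca (S K) w) (fun w => fB (Z.of_nat (S K)) * Cb (S K) w));
    apply homog_scal; auto.
Qed.

Lemma l_P_bound K : Rabs (l - P K) <= M / INR (S K) * INR (length g).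
Proof.
  assert (Hi : homog (inner fA fB) g l).
  { apply (homog_transfer _ _ _ _ (2 * M) Hl). intros w _. apply (split_inner _ _ M HM). }
  pose proof (homog_minus _ _ _ _ _ Hi (homog_T K)) as H.
  assert (H2 : homog (inner (tl fA K) (tl fB K)) g (l - P K)).
  { eapply homog_ext; [|exact H]. intros w Hw. simpl. rewrite (inner_split_T K w Hw). ring. }
  apply (cv_le_bound _ _ _ H2). intro n.
  pose proof M0. pose proof (INRS_pos K). pose proof (INRS_pos n).
  assert (Hge : 0 <= M / INR (S K)) by (apply Rmult_le_pos; [lra|left; apply Rinv_0_lt_compat; lra]).
  apply Rabs_div_le; auto.
  eapply Rle_trans; [apply inner_bound; [apply tl_bound|exact Hge]|].
  pose proof (pow_length g (S n)) as HL. apply le_INR in HL. rewrite mult_INR in HL.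
  pose proof (pos_INR (length g)). nra.
Qed.

Lemma hat_sum : infinite_sum (fun n => fA (Z.of_nat (S n)) * ca (S n) + fB (Z.of_nat (S n)) * cb (S n)) l.
Proof.
  intros eps He. destruct (INR_unbounded (M * INR (length g) / eps)) as [N HN].
  exists N. intros n Hn.
  rewrite (sum_f_R0_sumF (fun k => fA (Z.of_nat k) * ca k + fB (Z.of_nat k) * cb k)).
  fold (P (S n)). unfold Rdist. rewrite Rabs_minus_sym.
  eapply Rle_lt_trans; [apply l_P_bound|].
  pose proof M0. pose proof (pos_INR (length g)).
  assert (INR N <= INR n) by (apply le_INR; lia).
  assert (HS : INR (S (S n)) = INR n + 2) by (rewrite !S_INR; ring).
  rewrite HS. apply (Rmult_lt_reg_r (INR n + 2)); [pose proof (pos_INR n); lra|].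
  replace (M / (INR n + 2) * INR (length g) * (INR n + 2)) with (M * INR (length g))
    by (field; pose proof (pos_INR n); lra).
  assert (M * INR (length g) / eps * eps = M * INR (length g)) by (field; lra).
  assert (M * INR (length g) / eps * eps < INR N * eps) by (apply Rmult_lt_compat_r; lra).
  nra.
Qed.

End Main.


Section Fin.
Variables fA fB : Z -> R.

Definition entries (k : nat) : list (word * R) :=
  (pat Ga Gb k false false, fA (Z.of_nat k)) :: (pat Ga Gb k false true, fA (Z.of_nat k)) ::
  (pat Ga Gb k true false, fA (Z.of_nat k)) :: (pat Ga Gb k true true, fA (Z.of_nat k)) ::
  (pat Gb Ga k false false, fB (Z.of_nat k)) :: (pat Gb Ga k false true, fB (Z.of_nat k)) ::
  (pat Gb Ga k true false, fB (Z.of_nat k)) :: (pat Gb Ga k true true, fB (Z.of_nat k)) :: nil.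

Fixpoint mkL (K : nat) : list (word * R) :=
  match K with O => nil | S K' => mkL K' ++ entries (S K') end.

Lemma lin_comb_acc (L : list (word * R)) a w :
  fold_right (fun p acc => snd p * Ccount (fst p) w + acc) a L =
  fold_right (fun p acc => snd p * Ccount (fst p) w + acc) 0 L + a.
Proof. induction L as [|p L IH]; cbn [fold_right]; [ring|]. rewrite IH. ring. Qed.

Lemma lin_comb_app L1 L2 w : lin_comb (L1 ++ L2) w = lin_comb L1 w + lin_comb L2 w.
Proof. unfold lin_comb at 1. rewrite fold_right_app. rewrite lin_comb_acc. unfold lin_comb. ring. Qed.

Lemma lin_comb_entries k w : lin_comb (entries k) w = series_term fA fB k w.
Proof.
  unfold lin_comb, entries, series_term. simpl.
  change (Ca k w) with (Cgen Ga Gb k w). change (Cb k w) with (Cgen Gb Ga k w). unfold Cgen. ring.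
Qed.

Lemma lin_comb_mkL K w : lin_comb (mkL K) w = T fA fB K w.
Proof.
  induction K; [reflexivity|]. simpl. rewrite lin_comb_app, IHK, lin_comb_entries. reflexivity.
Qed.

Lemma reduced_rep x y e k : gen_eqb y x = false ->
  reduced ((x,false) :: repeat (x,false) k ++ (y,e) :: nil).
Proof.
  intro H. induction k; simpl.
  - split; auto. destruct x, y, e; simpl in *; auto; discriminate.
  - split; auto. destruct x; reflexivity.
Qed.

Lemma reduced_pat x y k e1 e2 : gen_eqb y x = false -> (1 <= k)%nat -> reduced (pat x y k e1 e2).
Proof.
  intros H Hk. destruct k as [|k]; [lia|]. unfold pat. simpl.
  split; [|apply reduced_rep; auto]. destruct x, y, e1; simpl in *; auto; discriminate.
Qed.

Lemma mkL_reduced K : forall p, In p (mkL K) -> reduced (fst p).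
Proof.
  induction K; simpl; [tauto|]. intros p Hp. apply in_app_or in Hp. destruct Hp as [Hp|Hp]; auto.
  unfold entries in Hp. simpl in Hp.
  repeat (destruct Hp as [<-|Hp]; [apply reduced_pat; auto; lia|]). destruct Hp.
Qed.
End Fin.


Theorem theorem3p25 (fA fB : Z -> R)
  (hA : bounded_alternating fA) (hB : bounded_alternating fB) :
  exists Phi : word -> R,
    (* Phi g = sum_{k>=1} f_A(a^k) C_{a,k}(g) + f_B(b^k) C_{b,k}(g), pointwise convergent *)
    (forall g : word, reduced g ->
       infinite_sum (fun n => series_term fA fB (S n) g) (Phi g)) /\
    is_quasimorphism Phi /\
    bounded_distance (split_qm fA fB) Phi /\
    (* hat f = sum_{k>=1} f_A(a^k) hat C_{a,k} + f_B(b^k) hat C_{b,k} *)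
    (forall g : word, reduced g ->
       exists (l : R) (ca cb : nat -> R),
         homog (split_qm fA fB) g l /\
         (forall k : nat, homog (Ca k) g (ca k) /\ homog (Cb k) g (cb k)) /\
         infinite_sum
           (fun n => fA (Z.of_nat (S n)) * ca (S n) + fB (Z.of_nat (S n)) * cb (S n)) l) /\
    (finitely_supported fA -> finitely_supported fB ->
       exists L : list (word * R),
         (forall p, In p L -> reduced (fst p)) /\
         bounded_distance (split_qm fA fB) (lin_comb L)).
Proof.
Proof.
  destruct hA as [[MA HMA] aA], hB as [[MB HMB] aB].
  set (M := Rmax MA MB).
  assert (HA : forall k, Rabs (fA k) <= M) by (intro; eapply Rle_trans; [apply HMA|apply Rmax_l]).
  assert (HB : forall k, Rabs (fB k) <= M) by (intro; eapply Rle_trans; [apply HMB|apply Rmax_r]).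
  pose proof (HM fA fB M HA HB) as HMs.
  exists (inner fA fB). split; [|split; [|split; [|split]]].
  - intros g Hg eps He. exists (length g). intros n Hn.
    rewrite (sum_f_R0_sumF (fun k => series_term fA fB k g)).
    rewrite (lemmaA fA fB aA aB g Hg) by lia. unfold Rdist. rewrite Rminus_diag, Rabs_R0. lra.
  - exists (15 * M). apply (inner_quasi fA fB M HMs aA aB).
  - exists (2 * M). intros g _. apply (split_inner fA fB M HMs).
  - intros g Hg.
    assert (Qs : exists D, quasi_on (split_qm fA fB) D)
      by (exists (9 * M); intros a b Ha Hb; apply (split_qm_quasi fA fB M HMs aA aB); auto).
    exists (proj1_sig (homog_exists _ g Qs)),
      (fun k => proj1_sig (homog_exists _ g (Ca_quasi k))),
      (fun k => proj1_sig (homog_exists _ g (Cb_quasi k))).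
    split; [apply proj2_sig|split].
    + intro k. split; apply proj2_sig.
    + exact (hat_sum fA fB aA aB M HA HB _ _ g (fun k => proj2_sig _) (fun k => proj2_sig _) _ (proj2_sig _)).
  - intros [NA HNA] [NB HNB].
    set (K0 := Z.to_nat (Z.max NA NB)).
    exists (mkL fA fB K0). split; [apply mkL_reduced|].
    exists (2 * M). intros w Hw.
    assert (E : inner fA fB w = lin_comb (mkL fA fB K0) w).
    { rewrite lin_comb_mkL. unfold T.
      rewrite <- (lemmaA fA fB aA aB w Hw (Nat.max K0 (length w))) by lia.
      apply sumF_trunc; [|lia]. intros k Hk. unfold series_term.
      rewrite HNA, HNB by (unfold K0 in Hk; lia). ring. }
    rewrite <- E. apply (split_inner fA fB M HMs).
Qed.
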